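(* Let $\Omega\subset\mathbb{C}$ be a domain, $p>0$, and let $\overline D_n\subset\Omega$, $n=1,2,\dots,\mathcal N$ ($\mathcal N$ finite or infinite), be closed discs of radius $R>0$, where if $\mathcal N=\infty$ there exists $N$ such that the $\overline D_n$ are pairwise disjoint for $n>N$. Then $$\mathcal A(\Omega)\cap\mathcal A_p\Big(\Omega\setminus\bigcup_{n=1}^{\mathcal N}\overline D_n\Big)\subset\mathcal A_p(\Omega).$$
   Context: For a domain (open set) $\Omega'\subset\mathbb{C}$, $\mathcal A(\Omega')$ is the algebra of holomorphic functions on $\Omega'$, and for $p>0$, $\mathcal A_p(\Omega')=\{f\in\mathcal A(\Omega'):\exists\,c,M>0\text{ with }|f(\lambda)|\le Me^{c|\lambda|^p}\text{ for all }\lambda\in\Omega'\}$. The statement means: if $f$ is holomorphic on $\Omega$ and satisfies such a bound on $\Omega\setminus\bigcup\overline D_n$, then it satisfies such a bound (with possibly different constants) on all of $\Omega$. *)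

(* Defs.v *)
From Stdlib Require Import Reals.
From Coquelicot Require Import Coquelicot.
Open Scope R_scope.

(* |x|^p for x >= 0, with the convention 0^p = 0 (p > 0); Stdlib's Rpower
   would give Rpower 0 p = 1. *)
Definition rpow (x p : R) : R :=
  if Req_EM_T x 0 then 0 else Rpower x p.

Definition holo_on (U : C -> Prop) (f : C -> C) : Prop :=
  forall z : C, U z -> @ex_derive C_AbsRing C_NormedModule f z.

Definition growth_p (p : R) (U : C -> Prop) (f : C -> C) : Prop :=
  exists c M : R, 0 < c /\ 0 < M /\
    forall z : C, U z -> Cmod (f z) <= M * exp (c * rpow (Cmod z) p).

Definition A_p (p : R) (U : C -> Prop) (f : C -> C) : Prop :=
  holo_on U f /\ growth_p p U f.

(* index set of the discs (0-based): Some N = finitely many (n < N),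
   None = infinitely many (all n : nat) *)
Definition in_idx (NN : option nat) (n : nat) : Prop :=
  match NN with Some N => (n < N)%nat | None => True end.

Definition cdisc (a : C) (R : R) (z : C) : Prop := Cmod (Cminus z a) <= R.

(* Main.v *)
Require Import Defs.
From Stdlib Require Import Reals.
From Coquelicot Require Import Coquelicot.
From Stdlib Require Import Lra Lia Classical ClassicalEpsilon List.
Open Scope R_scope.

Lemma Cmod_le_abs (x y : R) : Cmod (x, y) <= Rabs x + Rabs y.
Proof.
  unfold Cmod; simpl.
  rewrite <- (sqrt_square (Rabs x + Rabs y)) by (pose proof (Rabs_pos x); pose proof (Rabs_pos y); lra).
  apply sqrt_le_1_alt.
  replace (x * (x * 1) + y * (y * 1)) with (Rabs x * Rabs x + Rabs y * Rabs y).
  2:{ rewrite <- !Rabs_mult. rewrite !Rabs_right; try ring; apply Rle_ge; nra. }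
  pose proof (Rabs_pos x); pose proof (Rabs_pos y); nra.
Qed.

Lemma abs_fst_le (z : C) : Rabs (fst z) <= Cmod z.
Proof. destruct z as [x y]. pose proof (Rmax_Cmod (x,y)). simpl in *.
  pose proof (Rmax_l (Rabs x) (Rabs y)). lra. Qed.
Lemma abs_snd_le (z : C) : Rabs (snd z) <= Cmod z.
Proof. destruct z as [x y]. pose proof (Rmax_Cmod (x,y)). simpl in *.
  pose proof (Rmax_r (Rabs x) (Rabs y)). lra. Qed.

Lemma sin_lip (a b : R) : Rabs (sin a - sin b) <= Rabs (a - b).
Proof.
  destruct (MVT_abs sin cos b a) as [c [Hc _]].
  { intros; apply derivable_pt_lim_sin. }
  rewrite Hc. pose proof (COS_bound c). pose proof (Rabs_pos (a-b)).
  assert (Rabs (cos c) <= 1) by (apply Rabs_le; lra). nra.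
Qed.
Lemma cos_lip (a b : R) : Rabs (cos a - cos b) <= Rabs (a - b).
Proof.
  destruct (MVT_abs cos (fun x => - sin x) b a) as [c [Hc _]].
  { intros; apply derivable_pt_lim_cos. }
  rewrite Hc. pose proof (SIN_bound c). pose proof (Rabs_pos (a-b)).
  assert (Rabs (- sin c) <= 1) by (rewrite Rabs_Ropp; apply Rabs_le; lra). nra.
Qed.

Definition cdiff (g : C -> C) (z : C) : Prop := exists l : C, forall eps, 0 < eps -> exists del, 0 < del /\
    forall z', Cmod (z' - z) < del -> Cmod (g z' - g z - l * (z' - z)) <= eps * Cmod (z' - z).

Lemma diff_eps (g : C -> C) (z : C) :
  ex_derive g z -> exists l : C, forall eps, 0 < eps -> exists del, 0 < del /\
    forall z', Cmod (z' - z) < del -> Cmod (g z' - g z - l * (z' - z)) <= eps * Cmod (z' - z).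
Proof.
  intros [l [_ Hl]]. exists l. intros eps He.
  assert (Hf : is_filter_lim (@locally (AbsRing_UniformSpace C_AbsRing) z) z) by (intros P HP; exact HP).
  specialize (Hl z Hf (mkposreal eps He)).
  destruct Hl as [d Hd]. exists d. split; [apply cond_pos|].
  intros z' Hz'. 
  assert (Hb : @ball (AbsRing_UniformSpace C_AbsRing) z d z').
  { exact Hz'. }
  specialize (Hd z' Hb). simpl in Hd.
  replace (l * (z' - z))%C with ((z' - z) * l)%C by ring.
  exact Hd.
Qed.

Lemma ex_derive_cdiff g z : ex_derive g z -> cdiff g z.
Proof. apply diff_eps. Qed.

Lemma cont_eps (g : C -> C) (z : C) :
  cdiff g z -> forall eps, 0 < eps -> exists del, 0 < del /\
    forall z', Cmod (z' - z) < del -> Cmod (g z' - g z) < eps.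
Proof.
  intros Hd eps He. destruct Hd as [l Hl].
  destruct (Hl 1 Rlt_0_1) as [d [Hd0 Hd1]].
  pose proof (Cmod_ge_0 l).
  exists (Rmin d (eps / (Cmod l + 2))). split.
  { apply Rmin_pos; auto. apply Rdiv_lt_0_compat; lra. }
  intros z' Hz. pose proof (Rmin_l d (eps / (Cmod l + 2))).
  pose proof (Rmin_r d (eps / (Cmod l + 2))).
  specialize (Hd1 z' ltac:(lra)).
  replace (g z' - g z)%C with ((g z' - g z - l * (z' - z)) + l * (z' - z))%C by ring.
  eapply Rle_lt_trans; [apply Cmod_triangle|].
  rewrite Cmod_mult. pose proof (Cmod_ge_0 (z' - z)).
  assert (Cmod (z' - z) * (Cmod l + 2) < eps).
  { assert (Hz2 : Cmod (z' - z) < eps / (Cmod l + 2)) by lra.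
    apply (Rmult_lt_compat_r (Cmod l + 2)) in Hz2; [|lra].
    unfold Rdiv in Hz2. rewrite Rmult_assoc, Rinv_l in Hz2 by lra. lra. }
  nra.
Qed.

Lemma cont_of_eps (h : R -> R) (x : R) :
  (forall eps, 0 < eps -> exists del, 0 < del /\ forall y, Rabs (y - x) < del -> Rabs (h y - h x) < eps) ->
  continuity_pt h x.
Proof.
  intros H eps He. destruct (H eps He) as [d [Hd Hd1]]. exists d. split; auto.
  intros y [_ Hy]. apply Hd1. exact Hy.
Qed.

Lemma ex_RInt_cpt (h : R -> R) (a b : R) :
  (forall x, Rmin a b <= x <= Rmax a b -> continuity_pt h x) -> ex_RInt h a b.
Proof.
  intros H. apply (@ex_RInt_continuous R_CompleteNormedModule). intros z Hz. apply continuity_pt_filterlim. auto.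
Qed.

Lemma ChaslesR (f : R -> R) a b c : ex_RInt f a b -> ex_RInt f b c ->
  RInt f a b + RInt f b c = RInt f a c.
Proof. intros H1 H2. exact (RInt_Chasles f a b c H1 H2). Qed.

Lemma Cmod_fst_diff (a b : C) : Rabs (fst a - fst b) <= Cmod (a - b).
Proof. pose proof (abs_fst_le (a - b)%C) as Hq. simpl in Hq. unfold Rminus. exact Hq. Qed.
Lemma Cmod_snd_diff (a b : C) : Rabs (snd a - snd b) <= Cmod (a - b).
Proof. pose proof (abs_snd_le (a - b)%C) as Hq. simpl in Hq. unfold Rminus. exact Hq. Qed.

Section Polar.
Variables (g : C -> C) (w0 : C) (rho : R).
Hypothesis Hrho : 0 < rho.
Hypothesis Hd : forall z, Cmod (z - w0) <= rho -> cdiff g z.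

Definition P (r t : R) : C := (fst w0 + r * cos t, snd w0 + r * sin t).
Definition u r t := fst (g (P r t)).
Definition v r t := snd (g (P r t)).

Lemma P_dist r t : 0 <= r -> Cmod (P r t - w0) = r.
Proof.
  intros Hr. unfold Cmod, P. simpl.
  replace ((fst w0 + r * cos t + - fst w0) * ((fst w0 + r * cos t + - fst w0) * 1) +
   (snd w0 + r * sin t + - snd w0) * ((snd w0 + r * sin t + - snd w0) * 1)) with (r * r).
  - apply sqrt_square; auto.
  - pose proof (sin2_cos2 t) as Hsc. unfold Rsqr in Hsc. nra.
Qed.

Lemma P_lip r t r' t' : Cmod (P r t - P r' t') <= 2 * (Rabs (r - r') + Rabs r' * Rabs (t - t')).
Proof.
  assert (E : Cminus (P r t) (P r' t') = pair ((r - r') * cos t + r' * (cos t - cos t'))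
     ((r - r') * sin t + r' * (sin t - sin t'))) by (unfold P; apply injective_projections; simpl; ring).
  rewrite E.
  eapply Rle_trans; [apply Cmod_le_abs|].
  pose proof (cos_lip t t'). pose proof (sin_lip t t').
  pose proof (COS_bound t). pose proof (SIN_bound t).
  assert (A1 : Rabs ((r - r') * cos t + r' * (cos t - cos t')) <= Rabs (r - r') + Rabs r' * Rabs (t - t')).
  { eapply Rle_trans; [apply Rabs_triang|]. rewrite !Rabs_mult.
    assert (Rabs (cos t) <= 1) by (apply Rabs_le; lra).
    pose proof (Rabs_pos (r - r')). pose proof (Rabs_pos r'). nra. }
  assert (A2 : Rabs ((r - r') * sin t + r' * (sin t - sin t')) <= Rabs (r - r') + Rabs r' * Rabs (t - t')).
  { eapply Rle_trans; [apply Rabs_triang|]. rewrite !Rabs_mult.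
    assert (Rabs (sin t) <= 1) by (apply Rabs_le; lra).
    pose proof (Rabs_pos (r - r')). pose proof (Rabs_pos r'). nra. }
  lra.
Qed.

Lemma u_cont r t : 0 <= r <= rho -> continuity_pt (fun t => u r t) t.
Proof.
  intros Hr. destruct Hr as [Hr0 Hr1]. apply cont_of_eps. intros eps He.
  assert (HPd : Cmod (P r t - w0) <= rho) by (rewrite P_dist; lra).
  destruct (cont_eps g (P r t) (Hd _ HPd) eps He) as [d [Hd0 Hd1]].
  exists (d / (2 * r + 1)). split. { apply Rdiv_lt_0_compat; lra. }
  intros y Hy. unfold u. eapply Rle_lt_trans; [apply Cmod_fst_diff|]. apply Hd1.
  eapply Rle_lt_trans; [apply P_lip|].
  replace (r - r) with 0 by ring. rewrite Rabs_R0, (Rabs_right r) by lra.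
  assert (Hy2 : (2*r+1) * Rabs (y - t) < d).
  { replace d with ((2*r+1) * (d/(2*r+1))) by (field; lra). apply Rmult_lt_compat_l; lra. }
  pose proof (Rabs_pos (y - t)). nra.
Qed.

Lemma v_cont_r r t : 0 <= r <= rho -> continuity_pt (fun r => v r t) r.
Proof.
  intros Hr. destruct Hr as [Hr0 Hr1]. apply cont_of_eps. intros eps He.
  assert (HPd : Cmod (P r t - w0) <= rho) by (rewrite P_dist; lra).
  destruct (cont_eps g (P r t) (Hd _ HPd) eps He) as [d [Hd0 Hd1]].
  exists (d / 2). split. { lra. }
  intros y Hy. unfold v. eapply Rle_lt_trans; [apply Cmod_snd_diff|]. apply Hd1.
  eapply Rle_lt_trans; [apply P_lip|].
  replace (t - t) with 0 by ring. rewrite Rabs_R0. lra.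
Qed.

Lemma u_cont_r r t : 0 <= r <= rho -> continuity_pt (fun r => u r t) r.
Proof.
  intros Hr. destruct Hr as [Hr0 Hr1]. apply cont_of_eps. intros eps He.
  assert (HPd : Cmod (P r t - w0) <= rho) by (rewrite P_dist; lra).
  destruct (cont_eps g (P r t) (Hd _ HPd) eps He) as [d [Hd0 Hd1]].
  exists (d / 2). split. { lra. }
  intros y Hy. unfold u. eapply Rle_lt_trans; [apply Cmod_fst_diff|]. apply Hd1.
  eapply Rle_lt_trans; [apply P_lip|].
  replace (t - t) with 0 by ring. rewrite Rabs_R0. lra.
Qed.

Lemma vr_cont r t : 0 < r <= rho -> continuity_pt (fun r => v r t / r) r.
Proof.
  intros Hr. apply continuity_pt_div.
  - apply v_cont_r; lra.
  - apply continuity_pt_id.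
  - lra.
Qed.

Lemma u_ex r ta tb : 0 <= r <= rho -> ex_RInt (fun t => u r t) ta tb.
Proof. intros Hr. apply ex_RInt_cpt. intros; apply u_cont; auto. Qed.

Lemma vr_ex t ra rb : 0 < ra -> ra <= rb -> rb <= rho -> ex_RInt (fun r => v r t / r) ra rb.
Proof.
  intros H1 H2 H3. apply ex_RInt_cpt. intros x Hx.
  rewrite Rmin_left in Hx by lra. rewrite Rmax_right in Hx by lra.
  apply vr_cont; lra.
Qed.

Definition H r ta tb := RInt (fun t => u r t) ta tb.
Definition W t ra rb := RInt (fun r => v r t / r) ra rb.
Definition BQ ra rb ta tb := (H rb ta tb - H ra ta tb) - (W tb ra rb - W ta ra rb).

Lemma BQ_split_r ra rm rb ta tb : 0 < ra -> ra <= rm -> rm <= rb -> rb <= rho ->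
  BQ ra rb ta tb = BQ ra rm ta tb + BQ rm rb ta tb.
Proof.
  intros. unfold BQ, W.
  rewrite <- (ChaslesR (fun r => v r tb / r) ra rm rb) by (apply vr_ex; lra).
  rewrite <- (ChaslesR (fun r => v r ta / r) ra rm rb) by (apply vr_ex; lra).
  ring.
Qed.

Lemma BQ_split_t ra rb ta tm tb : 0 <= ra -> rb <= rho -> ra <= rb ->
  BQ ra rb ta tb = BQ ra rb ta tm + BQ ra rb tm tb.
Proof.
  intros. unfold BQ, H.
  rewrite <- (ChaslesR (fun t => u rb t) ta tm tb) by (apply u_ex; lra).
  rewrite <- (ChaslesR (fun t => u ra t) ta tm tb) by (apply u_ex; lra).
  ring.
Qed.


End Polar.

Section Local.
Variables (g : C -> C) (w0 : C) (rho : R).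
Hypothesis Hrho : 0 < rho.
Hypothesis Hd : forall z, Cmod (z - w0) <= rho -> cdiff g z.

Lemma BQ_local r1 rs ts eps : 0 < r1 -> r1 <= rs <= rho -> 0 < eps ->
  exists del, 0 < del /\ forall ra rb ta tb, r1 <= ra <= rs -> rs <= rb <= rho ->
    ta <= ts <= tb -> (rb - ra) + (tb - ta) < del ->
    Rabs (BQ g w0 ra rb ta tb) <= eps * ((rb - ra) + (tb - ta)) ^ 2.
Proof.
  intros Hr1 [Hrs1 Hrs2] He.
  set (zs := P w0 rs ts).
  assert (Hzs : Cmod (zs - w0) <= rho) by (unfold zs; rewrite P_dist; lra).
  destruct (Hd _ Hzs) as [l Hl].
  set (K0 := 4 * (1 + rho) * (1 + / r1)).
  assert (HK0 : 0 < K0) by (unfold K0; assert (0 < / r1) by (apply Rinv_0_lt_compat; lra); nra).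
  set (eps' := eps / K0).
  assert (He' : 0 < eps') by (apply Rdiv_lt_0_compat; lra).
  destruct (Hl eps' He') as [d' [Hd'0 Hd'1]].
  exists (d' / (2 * (1 + rho))). split. { apply Rdiv_lt_0_compat; lra. }
  intros ra rb ta tb [Hra1 Hra2] [Hrb1 Hrb2] [Hta Htb] Hs.
  set (s := (rb - ra) + (tb - ta)).
  set (D := 2 * (1 + rho) * s).
  assert (HsD : D < d').
  { unfold D. replace d' with (2 * (1 + rho) * (d' / (2 * (1 + rho)))) by (field; lra).
    apply Rmult_lt_compat_l; [lra|]. exact Hs. }

  set (err := fun r t => (g (P w0 r t) - g zs - l * (P w0 r t - zs))%C).
  assert (Herr : forall r t, ra <= r <= rb -> ta <= t <= tb -> Cmod (err r t) <= eps' * D).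
  { intros r t Hr Ht.
    assert (Hc : Cmod (P w0 r t - zs) <= D).
    { unfold zs. eapply Rle_trans; [apply P_lip|]. unfold D, s.
      rewrite (Rabs_right rs) by lra.
      assert (Rabs (r - rs) <= (rb - ra) + (tb - ta)) by (apply Rabs_le; lra).
      assert (Rabs (t - ts) <= (rb - ra) + (tb - ta)) by (apply Rabs_le; lra).
      pose proof (Rabs_pos (t - ts)). nra. }
    unfold err. eapply Rle_trans; [apply Hd'1; lra|].
    apply Rmult_le_compat_l; lra. }

  set (l1 := fst l). set (l2 := snd l).
  assert (Id1 : forall r t, u g w0 r t = fst (err r t) + fst (g zs) + l1 * (fst w0 + r * cos t - fst zs)
     - l2 * (snd w0 + r * sin t - snd zs)).
  { intros r t. unfold err, u, l1, l2. 
    destruct (g (P w0 r t)) as [a1 a2]. destruct (g zs) as [b1 b2]. destruct l as [c1 c2].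
    destruct zs as [e1 e2]. unfold P. cbn [fst snd Cminus Cplus Copp Cmult]. ring. }

  assert (Id2 : forall r t, v g w0 r t = snd (err r t) + snd (g zs) + l1 * (snd w0 + r * sin t - snd zs)
     + l2 * (fst w0 + r * cos t - fst zs)).
  { intros r t. unfold err, v, l1, l2. 
    destruct (g (P w0 r t)) as [a1 a2]. destruct (g zs) as [b1 b2]. destruct l as [c1 c2].
    destruct zs as [e1 e2]. unfold P. cbn [fst snd Cminus Cplus Copp Cmult]. ring. }
  set (Kc := l1 * (sin tb - sin ta) + l2 * (cos tb - cos ta)).
  assert (I1 : is_RInt (fun t => minus (minus (u g w0 rb t) (u g w0 ra t)) ((rb - ra) * (l1 * cos t - l2 * sin t)))
     ta tb (minus (minus (H g w0 rb ta tb) (H g w0 ra ta tb)) (minus ((rb - ra) * (l1 * sin tb + l2 * cos tb))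
        ((rb - ra) * (l1 * sin ta + l2 * cos ta))))).
  { apply (@is_RInt_minus R_NormedModule). apply (@is_RInt_minus R_NormedModule).
    - apply (@RInt_correct R_CompleteNormedModule (fun t => u g w0 rb t)). apply (u_ex g w0 rho Hd); lra.
    - apply (@RInt_correct R_CompleteNormedModule (fun t => u g w0 ra t)). apply (u_ex g w0 rho Hd); lra.
    - apply (@is_RInt_derive R_CompleteNormedModule (fun t => (rb - ra) * (l1 * sin t + l2 * cos t))).
      + intros x _. auto_derive. auto. ring.
      + intros x _. apply (@ex_derive_continuous R_AbsRing R_NormedModule). auto_derive. auto. }

  assert (B1 : Rabs (H g w0 rb ta tb - H g w0 ra ta tb - (rb - ra) * Kc) <= (tb - ta) * (2 * (eps' * D))).
  { assert (Hpt : forall x, ta <= x <= tb -> @norm R_AbsRing R_NormedModule (minus (minus (u g w0 rb x) (u g w0 ra x)) ((rb - ra) * (l1 * cos x - l2 * sin x))) <= 2 * (eps' * D)).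
    { intros x Hx.
      change (Rabs (u g w0 rb x - u g w0 ra x - (rb - ra) * (l1 * cos x - l2 * sin x)) <= 2 * (eps' * D)).
      rewrite !Id1.
      replace (fst (err rb x) + fst (g zs) + l1 * (fst w0 + rb * cos x - fst zs) - l2 * (snd w0 + rb * sin x - snd zs) -
        (fst (err ra x) + fst (g zs) + l1 * (fst w0 + ra * cos x - fst zs) - l2 * (snd w0 + ra * sin x - snd zs)) -
        (rb - ra) * (l1 * cos x - l2 * sin x)) with (fst (err rb x) - fst (err ra x)) by ring.
      eapply Rle_trans; [apply Rabs_triang|]. rewrite Rabs_Ropp.
      pose proof (abs_fst_le (err rb x)). pose proof (abs_fst_le (err ra x)).
      pose proof (Herr rb x ltac:(lra) Hx). pose proof (Herr ra x ltac:(lra) Hx). lra. }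
    pose proof (@norm_RInt_le_const R_NormedModule _ ta tb _ (2 * (eps' * D)) ltac:(lra) Hpt I1) as HH.
    change (Rabs (H g w0 rb ta tb - H g w0 ra ta tb - ((rb - ra) * (l1 * sin tb + l2 * cos tb) - (rb - ra) * (l1 * sin ta + l2 * cos ta))) <= (tb - ta) * (2 * (eps' * D))) in HH.
    replace ((rb - ra) * Kc) with ((rb - ra) * (l1 * sin tb + l2 * cos tb) - (rb - ra) * (l1 * sin ta + l2 * cos ta)) by (unfold Kc; ring).
    exact HH. }

  assert (I2 : is_RInt (fun r => minus (minus (v g w0 r tb / r) (v g w0 r ta / r)) Kc)
     ra rb (minus (minus (W g w0 tb ra rb) (W g w0 ta ra rb)) (scal (rb - ra) Kc))).
  { apply (@is_RInt_minus R_NormedModule). apply (@is_RInt_minus R_NormedModule).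
    - apply (@RInt_correct R_CompleteNormedModule (fun r => v g w0 r tb / r)). apply (vr_ex g w0 rho Hd); lra.
    - apply (@RInt_correct R_CompleteNormedModule (fun r => v g w0 r ta / r)). apply (vr_ex g w0 rho Hd); lra.
    - apply (@is_RInt_const R_NormedModule). }
  assert (B2 : Rabs (W g w0 tb ra rb - W g w0 ta ra rb - (rb - ra) * Kc) <= (rb - ra) * (2 * (eps' * D) / r1)).
  { assert (Hpt : forall x, ra <= x <= rb -> @norm R_AbsRing R_NormedModule (minus (minus (v g w0 x tb / x) (v g w0 x ta / x)) Kc) <= 2 * (eps' * D) / r1).
    { intros x Hx.
      change (Rabs (v g w0 x tb / x - v g w0 x ta / x - Kc) <= 2 * (eps' * D) / r1).
      rewrite !Id2.
      replace ((snd (err x tb) + snd (g zs) + l1 * (snd w0 + x * sin tb - snd zs) + l2 * (fst w0 + x * cos tb - fst zs)) / x -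
        (snd (err x ta) + snd (g zs) + l1 * (snd w0 + x * sin ta - snd zs) + l2 * (fst w0 + x * cos ta - fst zs)) / x - Kc)
        with ((snd (err x tb) - snd (err x ta)) / x) by (unfold Kc; field; lra).
      unfold Rdiv. rewrite Rabs_mult, (Rabs_right (/ x)) by (apply Rle_ge, Rlt_le, Rinv_0_lt_compat; lra).
      assert (Hn : Rabs (snd (err x tb) - snd (err x ta)) <= 2 * (eps' * D)).
      { eapply Rle_trans; [apply Rabs_triang|]. rewrite Rabs_Ropp.
        pose proof (abs_snd_le (err x tb)). pose proof (abs_snd_le (err x ta)).
        pose proof (Herr x tb Hx ltac:(lra)). pose proof (Herr x ta Hx ltac:(lra)). lra. }
      assert (Hi : / x <= / r1) by (apply Rinv_le_contravar; lra).
      assert (0 < / x) by (apply Rinv_0_lt_compat; lra).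
      pose proof (Rabs_pos (snd (err x tb) - snd (err x ta))).
      assert (0 <= eps' * D) by (unfold D, s; apply Rmult_le_pos; [lra| nra]).
      nra. }
    pose proof (@norm_RInt_le_const R_NormedModule _ ra rb _ _ ltac:(lra) Hpt I2) as HH.
    exact HH. }
  unfold BQ.
  replace (H g w0 rb ta tb - H g w0 ra ta tb - (W g w0 tb ra rb - W g w0 ta ra rb)) with
    ((H g w0 rb ta tb - H g w0 ra ta tb - (rb - ra) * Kc) - (W g w0 tb ra rb - W g w0 ta ra rb - (rb - ra) * Kc)) by ring.
  eapply Rle_trans; [apply Rabs_triang|]. rewrite Rabs_Ropp.
  assert (Hfin : (tb - ta) * (2 * (eps' * D)) + (rb - ra) * (2 * (eps' * D) / r1) <= eps * s ^ 2).
  { assert (E : 2 * (eps' * D) = eps * s * (r1 / (r1 + 1))) by (unfold eps', D, K0; field; lra).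
    rewrite E.
    replace ((rb - ra) * (eps * s * (r1 / (r1 + 1)) / r1)) with ((rb - ra) * (eps * s * (1 / (r1 + 1)))) by (field; lra).
    assert (Ha : 0 <= r1 / (r1 + 1) <= 1).
    { split. apply Rlt_le, Rdiv_lt_0_compat; lra. apply Rmult_le_reg_r with (r1 + 1); [lra|].
      field_simplify; lra. }
    assert (Hb : 0 <= 1 / (r1 + 1) <= 1).
    { split. apply Rlt_le, Rdiv_lt_0_compat; lra. apply Rmult_le_reg_r with (r1 + 1); [lra|].
      field_simplify; lra. }
    assert (Hes : 0 <= eps * s) by (unfold s; nra).
    assert ((tb - ta) * (eps * s * (r1 / (r1 + 1))) <= (tb - ta) * (eps * s)).
    { apply Rmult_le_compat_l; [lra|]. nra. }
    assert ((rb - ra) * (eps * s * (1 / (r1 + 1))) <= (rb - ra) * (eps * s)).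
    { apply Rmult_le_compat_l; [lra|]. nra. }
    replace (eps * s ^ 2) with ((tb-ta)*(eps*s) + (rb-ra)*(eps*s)) by (unfold s; ring). lra. }
  lra.
Qed.
End Local.

Lemma INR_lt_pow2 n : INR n < 2 ^ n.
Proof.
  induction n. simpl; lra.
  rewrite S_INR. simpl. pose proof (pow_le 2 n ltac:(lra)). 
  assert (1 <= 2 ^ n) by (apply pow_R1_Rle; lra). lra.
Qed.

Lemma small_pow2 x d : 0 < d -> exists n, x / 2 ^ n < d.
Proof.
  intros Hd. destruct (archimed_cor1 (d / (Rabs x + 1))) as [N [HN HN0]].
  { apply Rdiv_lt_0_compat; auto. pose proof (Rabs_pos x); lra. }
  exists N. pose proof (INR_lt_pow2 N). pose proof (Rabs_pos x).
  assert (0 < INR N) by (apply lt_0_INR; lia).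
  assert (Hp : 0 < 2 ^ N) by lra.
  assert (x / 2 ^ N <= Rabs x / INR N).
  { unfold Rdiv. apply Rle_trans with (Rabs x * / 2 ^ N).
    - apply Rmult_le_compat_r. left; apply Rinv_0_lt_compat; lra. apply Rle_abs.
    - apply Rmult_le_compat_l; auto. apply Rinv_le_contravar; lra. }
  assert (Rabs x / INR N < d).
  { apply Rle_lt_trans with ((Rabs x + 1) * / INR N).
    { unfold Rdiv. apply Rmult_le_compat_r. left; apply Rinv_0_lt_compat; lra. lra. }
    apply Rmult_lt_compat_l with (r := Rabs x + 1) in HN; [|lra].
    replace ((Rabs x + 1) * (d / (Rabs x + 1))) with d in HN by (field; lra). exact HN. }
  lra.
Qed.

Record box := mkbox { bra : R; brb : R; bta : R; btb : R }.

Section Bisect.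
Variables (g : C -> C) (w0 : C) (rho r1 : R).
Hypothesis Hrho : 0 < rho.
Hypothesis Hr1 : 0 < r1.
Hypothesis Hd : forall z, Cmod (z - w0) <= rho -> cdiff g z.

Definition sz b := (brb b - bra b) + (btb b - bta b).
Definition BB b := BQ g w0 (bra b) (brb b) (bta b) (btb b).
Definition valid b := r1 <= bra b /\ bra b <= brb b /\ brb b <= rho /\ bta b <= btb b.
Definition rm b := (bra b + brb b) / 2.
Definition tm b := (bta b + btb b) / 2.
Definition q1 b := mkbox (bra b) (rm b) (bta b) (tm b).
Definition q2 b := mkbox (bra b) (rm b) (tm b) (btb b).
Definition q3 b := mkbox (rm b) (brb b) (bta b) (tm b).
Definition q4 b := mkbox (rm b) (brb b) (tm b) (btb b).

Lemma split4 b : valid b -> BB b = BB (q1 b) + BB (q2 b) + BB (q3 b) + BB (q4 b).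
Proof.
  intros [H1 [H2 [H3 H4]]]. unfold BB, q1, q2, q3, q4, rm, tm; simpl.
  rewrite (BQ_split_r g w0 rho Hd (bra b) ((bra b + brb b) / 2) (brb b)) by lra.
  rewrite (BQ_split_t g w0 rho Hd (bra b) ((bra b + brb b) / 2) (bta b) ((bta b + btb b) / 2)) by lra.
  rewrite (BQ_split_t g w0 rho Hd ((bra b + brb b) / 2) (brb b) (bta b) ((bta b + btb b) / 2)) by lra.
  ring.
Qed.

Variable kappa : R.
Hypothesis Hk : 0 < kappa.

Definition bad b := kappa * sz b ^ 2 < Rabs (BB b).

Definition next b :=
  if Rlt_dec (kappa * sz (q1 b) ^ 2) (Rabs (BB (q1 b))) then q1 b else
  if Rlt_dec (kappa * sz (q2 b) ^ 2) (Rabs (BB (q2 b))) then q2 b else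
  if Rlt_dec (kappa * sz (q3 b) ^ 2) (Rabs (BB (q3 b))) then q3 b else q4 b.

Lemma sz_q b : sz (q1 b) = sz b / 2 /\ sz (q2 b) = sz b / 2 /\ sz (q3 b) = sz b / 2 /\ sz (q4 b) = sz b / 2.
Proof. unfold sz, q1, q2, q3, q4, rm, tm; simpl. repeat split; field. Qed.

Lemma next_bad b : valid b -> bad b -> bad (next b).
Proof.
  intros Hv Hb. unfold next, bad in *.
  destruct (Rlt_dec _ _) as [h1|h1]; auto.
  destruct (Rlt_dec _ _) as [h2|h2]; auto.
  destruct (Rlt_dec _ _) as [h3|h3]; auto.
  destruct (Rlt_dec (kappa * sz (q4 b) ^ 2) (Rabs (BB (q4 b)))) as [h4|h4]; auto.
  exfalso. rewrite (split4 b Hv) in Hb.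
  destruct (sz_q b) as [e1 [e2 [e3 e4]]]. rewrite e1 in h1. rewrite e2 in h2. rewrite e3 in h3. rewrite e4 in h4.
  assert (Rabs (BB (q1 b) + BB (q2 b) + BB (q3 b) + BB (q4 b)) <=
    Rabs (BB (q1 b)) + Rabs (BB (q2 b)) + Rabs (BB (q3 b)) + Rabs (BB (q4 b))).
  { eapply Rle_trans; [apply Rabs_triang|]. eapply Rle_trans; [apply Rplus_le_compat_r, Rabs_triang|].
    eapply Rle_trans; [apply Rplus_le_compat_r, Rplus_le_compat_r, Rabs_triang|]. lra. }
  lra.
Qed.

Lemma next_cases b : next b = q1 b \/ next b = q2 b \/ next b = q3 b \/ next b = q4 b.
Proof.
  unfold next. destruct (Rlt_dec _ _); auto. destruct (Rlt_dec _ _); auto. destruct (Rlt_dec _ _); auto.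
Qed.

Definition nprops b b' := valid b' /\ bra b <= bra b' /\ brb b' <= brb b /\ bta b <= bta b' /\ btb b' <= btb b
  /\ brb b' - bra b' = (brb b - bra b) / 2 /\ btb b' - bta b' = (btb b - bta b) / 2.

Lemma next_props b : valid b -> nprops b (next b).
Proof.
  intros [H1 [H2 [H3 H4]]].
  destruct (next_cases b) as [E|[E|[E|E]]]; rewrite E; unfold nprops, valid, q1, q2, q3, q4, rm, tm; simpl;
  repeat split; try lra.
Qed.

Fixpoint seqb (b0 : box) (n : nat) : box :=
  match n with O => b0 | S n => next (seqb b0 n) end.

Section Seq.
Variable b0 : box.
Hypothesis Hv0 : valid b0.
Hypothesis Hb0 : bad b0.

Lemma seq_valid_bad n : valid (seqb b0 n) /\ bad (seqb b0 n).
Proof.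
  induction n; simpl; auto. destruct IHn as [Hv Hb]. split.
  - apply next_props; auto.
  - apply next_bad; auto.
Qed.

Lemma seq_mono n m : (n <= m)%nat ->
  bra (seqb b0 n) <= bra (seqb b0 m) /\ brb (seqb b0 m) <= brb (seqb b0 n) /\
  bta (seqb b0 n) <= bta (seqb b0 m) /\ btb (seqb b0 m) <= btb (seqb b0 n).
Proof.
  intros Hnm. induction Hnm. lra.
  simpl. destruct (next_props (seqb b0 m) (proj1 (seq_valid_bad m))) as [_ [a1 [a2 [a3 [a4 _]]]]].
  lra.
Qed.

Lemma seq_width n : brb (seqb b0 n) - bra (seqb b0 n) = (brb b0 - bra b0) / 2 ^ n /\
  btb (seqb b0 n) - bta (seqb b0 n) = (btb b0 - bta b0) / 2 ^ n.
Proof.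
  induction n; simpl. split; field.
  destruct (next_props (seqb b0 n) (proj1 (seq_valid_bad n))) as [_ [_ [_ [_ [_ [a5 a6]]]]]].
  rewrite a5, a6. destruct IHn as [e1 e2]. rewrite e1, e2. split; field; apply pow_nonzero; lra.
Qed.

Lemma seq_cross n m : bra (seqb b0 n) <= brb (seqb b0 m) /\ bta (seqb b0 n) <= btb (seqb b0 m).
Proof.
  destruct (seq_mono n (max n m) ltac:(lia)) as [a1 [_ [a3 _]]].
  destruct (seq_mono m (max n m) ltac:(lia)) as [_ [b2 [_ b4]]].
  destruct (seq_valid_bad (max n m)) as [[_ [v2 [_ v4]]] _]. lra.
Qed.

End Seq.
End Bisect.

Section Gour.
Variables (g : C -> C) (w0 : C) (rho : R).
Hypothesis Hrho : 0 < rho.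
Hypothesis Hd : forall z, Cmod (z - w0) <= rho -> cdiff g z.

Lemma goursat ra rb ta tb : 0 < ra -> ra <= rb -> rb <= rho -> ta <= tb ->
  BQ g w0 ra rb ta tb = 0.
Proof.
  intros H1 H2 H3 H4.
  destruct (Req_dec (BQ g w0 ra rb ta tb) 0) as [E|E]; auto. exfalso.
  set (b0 := mkbox ra rb ta tb).
  assert (Hv0 : valid rho ra b0) by (unfold valid, b0; simpl; lra).
  set (kappa := Rabs (BB g w0 b0) / (2 * (sz b0 ^ 2 + 1))).
  assert (HBpos : 0 < Rabs (BB g w0 b0)) by (apply Rabs_pos_lt; exact E).
  assert (Hsz2 : 0 <= sz b0 ^ 2) by (apply pow2_ge_0).
  assert (Hk : 0 < kappa) by (unfold kappa; apply Rdiv_lt_0_compat; lra).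
  assert (Hb0 : bad g w0 kappa b0).
  { unfold bad, kappa. 
    replace (Rabs (BB g w0 b0) / (2 * (sz b0 ^ 2 + 1)) * sz b0 ^ 2) with
      (Rabs (BB g w0 b0) * (sz b0 ^ 2 / (2 * (sz b0 ^ 2 + 1)))) by (field; lra).
    assert (sz b0 ^ 2 / (2 * (sz b0 ^ 2 + 1)) < 1).
    { apply Rmult_lt_reg_r with (2 * (sz b0 ^ 2 + 1)); [lra|]. field_simplify; lra. }
    nra. }
  set (sq := seqb g w0 kappa b0).
  pose proof (seq_valid_bad g w0 rho ra H1 Hd kappa b0 Hv0 Hb0) as VB.
  pose proof (seq_cross g w0 rho ra H1 Hd kappa b0 Hv0 Hb0) as CR.
  pose proof (seq_width g w0 rho ra H1 Hd kappa b0 Hv0 Hb0) as WD.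
  set (Er := fun x => exists n, x = bra (sq n)).
  set (Et := fun x => exists n, x = bta (sq n)).
  assert (Hbr : bound Er).
  { exists (brb (sq 0%nat)). intros x [n ->]. apply (CR n 0%nat). }
  assert (Hbt : bound Et).
  { exists (btb (sq 0%nat)). intros x [n ->]. apply (CR n 0%nat). }
  destruct (completeness Er Hbr (ex_intro _ _ (ex_intro _ 0%nat eq_refl))) as [rs [Hrs1 Hrs2]].
  destruct (completeness Et Hbt (ex_intro _ _ (ex_intro _ 0%nat eq_refl))) as [ts [Hts1 Hts2]].
  assert (Rlo : forall n, bra (sq n) <= rs) by (intros n; apply Hrs1; exists n; auto).
  assert (Rhi : forall n, rs <= brb (sq n)).
  { intros n. apply Hrs2. intros x [m ->]. apply (CR m n). }
  assert (Tlo : forall n, bta (sq n) <= ts) by (intros n; apply Hts1; exists n; auto).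
  assert (Thi : forall n, ts <= btb (sq n)).
  { intros n. apply Hts2. intros x [m ->]. apply (CR m n). }
  destruct (VB 0%nat) as [[v1 [v2 [v3 v4]]] _]. simpl in v1, v2, v3, v4.
  pose proof (Rlo 0%nat). pose proof (Rhi 0%nat). simpl in *.
  destruct (BQ_local g w0 rho Hrho Hd ra rs ts (kappa / 2) H1 ltac:(unfold b0 in *; simpl in *; lra) ltac:(lra))
    as [del [Hdel Hloc]].
  destruct (small_pow2 (sz b0) del Hdel) as [n Hn].
  destruct (VB n) as [[w1 [w2 [w3 w4]]] Hbad].
  destruct (WD n) as [e1 e2].
  assert (Hszn : sz (sq n) = sz b0 / 2 ^ n).
  { unfold sz. fold sq in e1, e2. rewrite e1, e2. unfold b0; simpl. field. apply pow_nonzero; lra. }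
  specialize (Hloc (bra (sq n)) (brb (sq n)) (bta (sq n)) (btb (sq n))
    ltac:(split; [exact w1| apply Rlo]) ltac:(split; [apply Rhi| exact w3])
    ltac:(split; [apply Tlo | apply Thi])).
  assert (Hs : brb (sq n) - bra (sq n) + (btb (sq n) - bta (sq n)) < del).
  { change (sz (sq n) < del). rewrite Hszn. exact Hn. }
  specialize (Hloc Hs).
  unfold bad in Hbad. fold sq in Hbad. unfold BB, sz in Hbad.
  assert (0 <= (brb (sq n) - bra (sq n) + (btb (sq n) - bta (sq n))) ^ 2) by apply pow2_ge_0.
  set (X := (brb (sq n) - bra (sq n) + (btb (sq n) - bta (sq n))) ^ 2) in *. assert (kappa / 2 * X <= kappa * X) by nra. lra.
Qed.
End Gour.

Lemma cdiff_scal (f : C -> C) (lam z : C) : cdiff f z -> cdiff (fun z => (lam * f z)%C) z.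
Proof.
  intros [l Hl]. exists (lam * l)%C. intros eps He.
  pose proof (Cmod_ge_0 lam).
  destruct (Hl (eps / (Cmod lam + 1))) as [d [Hd0 Hd1]]. { apply Rdiv_lt_0_compat; lra. }
  exists d. split; auto. intros z' Hz.
  replace (lam * f z' - lam * f z - lam * l * (z' - z))%C with (lam * (f z' - f z - l * (z' - z)))%C by ring.
  rewrite Cmod_mult. specialize (Hd1 z' Hz).
  pose proof (Cmod_ge_0 (z' - z)).
  apply Rle_trans with (Cmod lam * (eps / (Cmod lam + 1) * Cmod (z' - z))).
  { apply Rmult_le_compat_l; auto. }
  assert (Cmod lam * (eps / (Cmod lam + 1)) <= eps).
  { apply Rmult_le_reg_r with (Cmod lam + 1); [lra|]. field_simplify; nra. }
  nra.
Qed.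

Section MV.
Variables (g : C -> C) (w0 : C) (rho : R).
Hypothesis Hrho : 0 < rho.
Hypothesis Hd : forall z, Cmod (z - w0) <= rho -> cdiff g z.

Lemma P_2PI r : P w0 r (2 * PI) = P w0 r 0.
Proof. unfold P. rewrite cos_2PI, sin_2PI, cos_0, sin_0. reflexivity. Qed.

Lemma J_const r1 : 0 < r1 -> r1 <= rho -> H g w0 rho 0 (2 * PI) = H g w0 r1 0 (2 * PI).
Proof.
  intros H1 H2. pose proof PI_RGT_0.
  pose proof (goursat g w0 rho Hrho Hd r1 rho 0 (2 * PI) H1 H2 (Rle_refl _) ltac:(lra)) as G.
  unfold BQ in G.
  assert (W g w0 (2 * PI) r1 rho = W g w0 0 r1 rho).
  { unfold W. apply (@RInt_ext R_CompleteNormedModule). intros x _. unfold v. rewrite P_2PI. reflexivity. }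
  lra.
Qed.

Lemma MV_eq : H g w0 rho 0 (2 * PI) = 2 * PI * fst (g w0).
Proof.
  pose proof PI_RGT_0 as HPI.
  set (X := H g w0 rho 0 (2 * PI) - 2 * PI * fst (g w0)).
  assert (Hb : forall eta, 0 < eta -> Rabs X <= 2 * PI * eta).
  { intros eta He.
    assert (Hw0 : Cmod (w0 - w0) <= rho).
    { replace (w0 - w0)%C with (RtoC 0) by ring. rewrite Cmod_0. lra. }
    destruct (cont_eps g w0 (Hd _ Hw0) eta He) as [d [Hd0 Hd1]].
    set (r1 := Rmin rho (d / 2)).
    assert (Hr1 : 0 < r1) by (apply Rmin_pos; lra).
    assert (Hr1r : r1 <= rho) by apply Rmin_l.
    assert (Hr1d : r1 < d) by (unfold r1; pose proof (Rmin_r rho (d/2)); lra).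
    unfold X. rewrite (J_const r1 Hr1 Hr1r).
    assert (I : is_RInt (fun t => minus (u g w0 r1 t) (fst (g w0))) 0 (2 * PI)
       (minus (H g w0 r1 0 (2 * PI)) (scal (2 * PI - 0) (fst (g w0))))).
    { apply (@is_RInt_minus R_NormedModule).
      - apply (@RInt_correct R_CompleteNormedModule (fun t => u g w0 r1 t)). apply (u_ex g w0 rho Hd); lra.
      - apply (@is_RInt_const R_NormedModule). }
    assert (Hpt : forall x, 0 <= x <= 2 * PI -> @norm R_AbsRing R_NormedModule (minus (u g w0 r1 x) (fst (g w0))) <= eta).
    { intros x Hx. change (Rabs (u g w0 r1 x - fst (g w0)) <= eta).
      unfold u. eapply Rle_trans; [apply Cmod_fst_diff|]. left. apply Hd1.
      rewrite P_dist; lra. }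
    pose proof (@norm_RInt_le_const R_NormedModule _ 0 (2 * PI) _ _ ltac:(lra) Hpt I) as HH.
    change (Rabs (H g w0 r1 0 (2 * PI) - (2 * PI - 0) * fst (g w0)) <= (2 * PI - 0) * eta) in HH.
    replace (2 * PI - 0) with (2 * PI) in HH by ring. exact HH. }
  destruct (Req_dec X 0) as [E|E].
  - unfold X in E. lra.
  - exfalso. assert (0 < Rabs X) by (apply Rabs_pos_lt; auto).
    specialize (Hb (Rabs X / (4 * PI)) ltac:(apply Rdiv_lt_0_compat; lra)).
    replace (2 * PI * (Rabs X / (4 * PI))) with (Rabs X / 2) in Hb by (field; lra). lra.
Qed.

End MV.

Lemma Cmod_sq (z : C) : Cmod z ^ 2 = fst z ^ 2 + snd z ^ 2.
Proof. apply Cmod2_alt. Qed.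

Lemma int_Pmod2 (w0 : C) (rho : R) :
  is_RInt (fun t => Cmod (P w0 rho t) ^ 2) 0 (2 * PI) (2 * PI * (Cmod w0 ^ 2 + rho ^ 2)).
Proof.
  set (x0 := fst w0). set (y0 := snd w0). set (c := x0 ^ 2 + y0 ^ 2 + rho ^ 2).
  apply (@is_RInt_ext R_NormedModule) with (f := fun t => c + 2 * rho * (x0 * cos t + y0 * sin t)).
  { intros t _. rewrite Cmod_sq. unfold P. simpl. fold x0 y0. unfold c.
    pose proof (sin2_cos2 t) as Hsc. unfold Rsqr in Hsc. nra. }
  replace (2 * PI * (Cmod w0 ^ 2 + rho ^ 2)) with
    (minus (c * (2 * PI) + 2 * rho * (x0 * sin (2 * PI) - y0 * cos (2 * PI)))
           (c * 0 + 2 * rho * (x0 * sin 0 - y0 * cos 0))).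
  2:{ rewrite sin_2PI, cos_2PI, sin_0, cos_0. rewrite Cmod_sq. unfold c, x0, y0. 
      unfold minus, plus, opp; simpl. ring. }
  apply (@is_RInt_derive R_CompleteNormedModule (fun t => c * t + 2 * rho * (x0 * sin t - y0 * cos t))).
  - intros x _. auto_derive. auto. ring.
  - intros x _. apply (@ex_derive_continuous R_AbsRing R_NormedModule). auto_derive. auto.
Qed.

Lemma sub_circle (f : C -> C) (w0 : C) (rho : R) : 0 < rho ->
  (forall z, Cmod (z - w0) <= rho -> cdiff f z) -> forall eps, 0 < eps ->
  exists t, Cmod (f w0) + eps * Cmod w0 ^ 2 < Cmod (f (P w0 rho t)) + eps * Cmod (P w0 rho t) ^ 2.
Proof.
  intros Hrho Hd eps He. pose proof PI_RGT_0 as HPI.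
  set (m := Cmod (f w0)).
  assert (Hlam : exists lam : C, Cmod lam <= 1 /\ fst (lam * f w0)%C = m).
  { destruct (Req_dec m 0) as [E|E].
    - exists (RtoC 1). rewrite Cmod_1. split; [lra|].
      assert (Hf0 : f w0 = RtoC 0) by (apply Cmod_eq_0; exact E). rewrite Hf0, E. simpl. ring.
    - pose proof (Cmod_ge_0 (f w0)) as Hq. fold m in Hq.
      assert (Hm2 : m ^ 2 = fst (f w0) ^ 2 + snd (f w0) ^ 2) by (unfold m; apply Cmod_sq).
      exists (pair (fst (f w0) / m) (- snd (f w0) / m)). split.
      + assert (Cmod (pair (fst (f w0) / m) (- snd (f w0) / m)) ^ 2 = 1).
        { rewrite Cmod_sq. simpl. field_simplify; [|lra]. rewrite <- Hm2. field. lra. }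
        pose proof (Cmod_ge_0 (pair (fst (f w0) / m) (- snd (f w0) / m))). nra.
      + simpl. field_simplify; [|lra]. 
        replace (fst (f w0) ^ 2 + snd (f w0) ^ 2) with (m ^ 2) by lra. field. lra. }
  destruct Hlam as [lam [Hl1 Hl2]].
  set (g := fun z => (lam * f z)%C).
  assert (Hdg : forall z, Cmod (z - w0) <= rho -> cdiff g z) by (intros; apply cdiff_scal; auto).
  pose proof (MV_eq g w0 rho Hrho Hdg) as MV. unfold g at 2 in MV. rewrite Hl2 in MV.
  apply NNPP. intros Hn.
  assert (Hle : forall t, Cmod (f (P w0 rho t)) + eps * Cmod (P w0 rho t) ^ 2 <= m + eps * Cmod w0 ^ 2).
  { intros t. apply Rnot_lt_le. intros Hc. apply Hn. exists t. exact Hc. }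
  assert (I1 : is_RInt (fun t => plus (u g w0 rho t) (scal eps (Cmod (P w0 rho t) ^ 2))) 0 (2 * PI)
     (plus (H g w0 rho 0 (2 * PI)) (scal eps (2 * PI * (Cmod w0 ^ 2 + rho ^ 2))))).
  { apply (@is_RInt_plus R_NormedModule).
    - apply (@RInt_correct R_CompleteNormedModule (fun t => u g w0 rho t)). apply (u_ex g w0 rho Hdg); lra.
    - apply (@is_RInt_scal R_NormedModule). apply int_Pmod2. }
  pose proof (@is_RInt_const R_NormedModule 0 (2 * PI) (m + eps * Cmod w0 ^ 2)) as I2.
  pose proof (is_RInt_le _ _ 0 (2 * PI) _ _ ltac:(lra) I1 I2) as Hcmp.
  assert (Hpt : forall x, 0 < x < 2 * PI -> plus (u g w0 rho x) (scal eps (Cmod (P w0 rho x) ^ 2)) <= m + eps * Cmod w0 ^ 2).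
  { intros x _. change (u g w0 rho x + eps * Cmod (P w0 rho x) ^ 2 <= m + eps * Cmod w0 ^ 2).
    specialize (Hle x).
    assert (u g w0 rho x <= Cmod (f (P w0 rho x))).
    { unfold u, g. eapply Rle_trans; [apply Rle_abs|]. eapply Rle_trans; [apply abs_fst_le|].
      rewrite Cmod_mult. pose proof (Cmod_ge_0 (f (P w0 rho x))). nra. }
    lra. }
  specialize (Hcmp Hpt).
  change (H g w0 rho 0 (2 * PI) + eps * (2 * PI * (Cmod w0 ^ 2 + rho ^ 2)) <= (2 * PI - 0) * (m + eps * Cmod w0 ^ 2)) in Hcmp.
  rewrite MV in Hcmp.
  assert (0 < eps * (2 * PI) * rho ^ 2) by (apply Rmult_lt_0_compat; [nra| nra]).
  nra.
Qed.

Definition toT (w : C) : Compactness.Tn 2 R := (fst w, (snd w, tt)).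
Definition fromT (t : Compactness.Tn 2 R) : C := let '(a, (b, _)) := t in (a, b).

Lemma bounded_above (K : C -> Prop) (L : R) (h : C -> R) :
  (forall w, K w -> Cmod w <= L) ->
  (forall w, ~ K w -> exists r, 0 < r /\ forall v, Cmod (v - w) < r -> ~ K v) ->
  (forall w, K w -> exists r, 0 < r /\ exists M, forall v, K v -> Cmod (v - w) < r -> h v <= M) ->
  exists M, forall w, K w -> h w <= M.
Proof.
  intros Hbd Hcl Hloc.
  set (spec := fun (t : Compactness.Tn 2 R) (d : posreal) =>
    (K (fromT t) -> exists M, forall v, K v -> Cmod (v - fromT t) < 2 * d -> h v <= M) /\
    (~ K (fromT t) -> forall v, Cmod (v - fromT t) < 2 * d -> ~ K v)).
  assert (Hex : forall t, exists d, spec t d).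
  { intros t. destruct (classic (K (fromT t))) as [Hk|Hk].
    - destruct (Hloc _ Hk) as [r [Hr [M HM]]].
      exists (mkposreal (r / 2) ltac:(lra)). split.
      + intros _. exists M. intros v Kv Hv. apply HM; auto. simpl in Hv. lra.
      + intros Hn; contradiction.
    - destruct (Hcl _ Hk) as [r [Hr HM]].
      exists (mkposreal (r / 2) ltac:(lra)). split.
      + intros Hn; contradiction.
      + intros _ v Hv. apply HM. simpl in Hv. lra. }
  set (delta := fun t => proj1_sig (constructive_indefinite_description _ (Hex t))).
  assert (Hdelta : forall t, spec t (delta t)).
  { intros t. unfold delta. destruct (constructive_indefinite_description _ (Hex t)); auto. }
  pose proof (Compactness.compactness_list 2 (-L, (-L, tt)) (L, (L, tt)) delta) as Hc.
  apply NNPP. intros Hnot. apply Hc. intros [l Hl].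
  assert (Hlist : forall l : list (Compactness.Tn 2 R), exists M, forall t, In t l -> K (fromT t) ->
     forall v, K v -> Cmod (v - fromT t) < 2 * delta t -> h v <= M).
  { induction l0 as [|t l0 IH].
    - exists 0. intros t [].
    - destruct IH as [M1 HM1].
      destruct (classic (K (fromT t))) as [Hk|Hk].
      + destruct (proj1 (Hdelta t) Hk) as [M2 HM2].
        exists (Rmax M1 M2). intros t' [<-|Hin] Kt v Kv Hv.
        * eapply Rle_trans; [apply HM2; auto| apply Rmax_r].
        * eapply Rle_trans; [apply (HM1 t'); auto| apply Rmax_l].
      + exists M1. intros t' [<-|Hin] Kt v Kv Hv.
        * contradiction.
        * apply (HM1 t'); auto. }
  destruct (Hlist l) as [M HM]. apply Hnot. exists M. intros w Kw.
  assert (Hb : Compactness.bounded_n 2 (-L, (-L, tt)) (L, (L, tt)) (toT w)).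
  { unfold toT. simpl. pose proof (abs_fst_le w). pose proof (abs_snd_le w). pose proof (Hbd w Kw).
    split; [|split; [|exact I]]; split; 
    match goal with |- context [fst w] => pose proof (Rabs_le_between _ _ _ ltac:(lra)) as HH | _ => idtac end;
    unfold Rabs in *; destruct (Rcase_abs (fst w)); destruct (Rcase_abs (snd w)); lra. }
  destruct (Hl _ Hb) as [t [Hin [Htb Hclose]]].
  destruct t as [a [b []]]. unfold toT in Hclose. simpl in Hclose.
  destruct Hclose as [H1 [H2 _]].
  assert (Hd : Cmod (w - fromT (a, (b, tt))) < 2 * delta (a, (b, tt))).
  { simpl. eapply Rle_lt_trans; [apply Cmod_le_abs|]. simpl.
    replace (fst w + - a) with (fst w - a) by ring. replace (snd w + - b) with (snd w - b) by ring. lra. }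
  destruct (classic (K (fromT (a, (b, tt))))) as [Kt|Kt].
  - apply (HM _ Hin Kt w Kw Hd).
  - exfalso. exact (proj2 (Hdelta _) Kt w Hd Kw).
Qed.

Lemma max_attained (K : C -> Prop) (L : R) (phi : C -> R) (z0 : C) :
  (forall w, K w -> Cmod w <= L) ->
  (forall w, ~ K w -> exists r, 0 < r /\ forall v, Cmod (v - w) < r -> ~ K v) ->
  (forall w, K w -> forall eps, 0 < eps -> exists r, 0 < r /\ forall v, K v -> Cmod (v - w) < r -> Rabs (phi v - phi w) < eps) ->
  K z0 -> exists w0, K w0 /\ forall w, K w -> phi w <= phi w0.
Proof.
  intros Hbd Hcl Hct Kz0.
  destruct (bounded_above K L phi Hbd Hcl) as [M HM].
  { intros w Kw. destruct (Hct w Kw 1 Rlt_0_1) as [r [Hr Hr1]]. exists r. split; auto.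
    exists (phi w + 1). intros v Kv Hv. specialize (Hr1 v Kv Hv). apply Rabs_def2 in Hr1. lra. }
  set (E := fun x => exists w, K w /\ x = phi w).
  assert (HbE : bound E) by (exists M; intros x [w [Kw ->]]; auto).
  destruct (completeness E HbE (ex_intro _ (phi z0) (ex_intro _ z0 (conj Kz0 eq_refl)))) as [S [HS1 HS2]].
  assert (Hle : forall w, K w -> phi w <= S) by (intros w Kw; apply HS1; exists w; auto).
  destruct (classic (exists w0, K w0 /\ phi w0 = S)) as [[w0 [Kw0 E0]]|Hno].
  { exists w0. split; auto. intros w Kw. rewrite E0. auto. }
  assert (Hlt : forall w, K w -> phi w < S).
  { intros w Kw. destruct (Rle_lt_or_eq_dec _ _ (Hle w Kw)) as [h|h]; auto.
    exfalso. apply Hno. exists w. auto. }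
  destruct (bounded_above K L (fun w => / (S - phi w)) Hbd Hcl) as [Mp HMp].
  { intros w Kw. pose proof (Hlt w Kw).
    destruct (Hct w Kw ((S - phi w) / 2) ltac:(lra)) as [r [Hr Hr1]]. exists r. split; auto.
    exists (2 / (S - phi w)). intros v Kv Hv. specialize (Hr1 v Kv Hv). apply Rabs_def2 in Hr1.
    pose proof (Hlt v Kv).
    replace (2 / (S - phi w)) with (/ ((S - phi w) / 2)) by (field; lra).
    apply Rinv_le_contravar; lra. }
  pose proof (HMp z0 Kz0). pose proof (Hlt z0 Kz0).
  assert (0 < / (S - phi z0)) by (apply Rinv_0_lt_compat; lra).
  assert (HMp0 : 0 < Mp) by lra.
  assert (Hub : is_upper_bound E (S - / Mp)).
  { intros x [w [Kw ->]]. pose proof (HMp w Kw). pose proof (Hlt w Kw).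
    assert (/ Mp <= S - phi w).
    { replace (S - phi w) with (/ / (S - phi w)) by (field; lra).
      apply Rinv_le_contravar; auto. apply Rinv_0_lt_compat; lra. }
    lra. }
  specialize (HS2 _ Hub). assert (0 < / Mp) by (apply Rinv_0_lt_compat; lra). lra.
Qed.

Lemma open_ball (Omega : C -> Prop) (x : C) : @open C_UniformSpace Omega -> Omega x ->
  exists r, 0 < r /\ forall y, Cmod (y - x) < r -> Omega y.
Proof.
  intros Ho Hx. destruct (Ho x Hx) as [eps Heps]. exists eps. split; [apply cond_pos|].
  intros y Hy. apply Heps.
  pose proof (abs_fst_le (y - x)%C). pose proof (abs_snd_le (y - x)%C).
  split; unfold ball; simpl; unfold AbsRing_ball, abs, minus, plus, opp; simpl in *; lra.
Qed.

Lemma Cmod_tri_w (w w0 : C) : Cmod w <= Cmod w0 + Cmod (w - w0).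
Proof.
  replace w with (w0 + (w - w0))%C at 1 by ring. apply Cmod_triangle.
Qed.

Lemma Cmod_rev (a b : C) : Rabs (Cmod a - Cmod b) <= Cmod (a - b).
Proof.
  apply Rabs_le. pose proof (Cmod_tri_w a b) as Hq1. pose proof (Cmod_tri_w b a) as Hq2.
  replace (b - a)%C with (- (a - b))%C in Hq2 by ring. rewrite Cmod_opp in Hq2. lra.
Qed.

Lemma MP (Omega : C -> Prop) (f : C -> C) (K : C -> Prop) (L B : R) :
  @open C_UniformSpace Omega -> holo_on Omega f -> (forall w, K w -> Omega w) ->
  (forall w, K w -> Cmod w <= L) ->
  (forall w, ~ K w -> exists r, 0 < r /\ forall v, Cmod (v - w) < r -> ~ K v) ->
  (forall w0, K w0 -> exists r, 0 < r /\ forall w, Cmod (w - w0) <= r -> ~ K w -> Cmod (f w) <= B) ->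
  forall z, K z -> Cmod (f z) <= B.
Proof.
  intros Ho Hh HKO Hbd Hcl Hloc z Kz.
  apply Rnot_lt_le. intros Hgt.
  assert (HL : 0 <= L) by (pose proof (Hbd z Kz); pose proof (Cmod_ge_0 z); lra).
  set (eps := (Cmod (f z) - B) / (2 * ((L + 1) ^ 2 + 1))).
  assert (He : 0 < eps) by (unfold eps; apply Rdiv_lt_0_compat; [lra|]; pose proof (pow2_ge_0 (L+1)); lra).
  set (phi := fun w => Cmod (f w) + eps * Cmod w ^ 2).
  assert (Hct : forall w, K w -> forall eta, 0 < eta -> exists r, 0 < r /\ forall v, K v -> Cmod (v - w) < r -> Rabs (phi v - phi w) < eta).
  { intros w Kw eta Heta.
    destruct (cont_eps f w (ex_derive_cdiff f w (Hh w (HKO w Kw))) (eta / 2) ltac:(lra)) as [d1 [Hd1 Hd1']].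
    pose proof (Cmod_ge_0 w) as Cw.
    set (d2 := eta / (2 * (eps * (2 * Cmod w + 1) + 1))).
    assert (Hd2 : 0 < d2) by (unfold d2; apply Rdiv_lt_0_compat; [lra|]; nra).
    exists (Rmin 1 (Rmin d1 d2)). split. { apply Rmin_pos; [lra|apply Rmin_pos; lra]. }
    intros v Kv Hv.
    pose proof (Rmin_l 1 (Rmin d1 d2)). pose proof (Rmin_r 1 (Rmin d1 d2)).
    pose proof (Rmin_l d1 d2). pose proof (Rmin_r d1 d2).
    specialize (Hd1' v ltac:(lra)).
    pose proof (Cmod_rev (f v) (f w)).
    pose proof (Cmod_rev v w) as Hrv. pose proof (Cmod_ge_0 v). pose proof (Cmod_ge_0 (v - w)).
    assert (Hsq : Rabs (Cmod v ^ 2 - Cmod w ^ 2) <= Cmod (v - w) * (2 * Cmod w + 1)).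
    { replace (Cmod v ^ 2 - Cmod w ^ 2) with ((Cmod v - Cmod w) * (Cmod v + Cmod w)) by ring.
      rewrite Rabs_mult. rewrite (Rabs_right (Cmod v + Cmod w)) by lra.
      pose proof (Rabs_pos (Cmod v - Cmod w)).
      assert (Cmod v <= Cmod w + 1) by (apply Rabs_le_between in Hrv; lra).
      apply Rle_trans with (Cmod (v - w) * (Cmod v + Cmod w)).
      - apply Rmult_le_compat_r; lra.
      - apply Rmult_le_compat_l; lra. }
    assert (Hd2' : eps * (Cmod (v - w) * (2 * Cmod w + 1)) < eta / 2).
    { assert (Hlt2 : Cmod (v - w) < d2) by lra.
      unfold d2 in Hlt2.
      apply Rle_lt_trans with (Cmod (v - w) * (eps * (2 * Cmod w + 1) + 1)).
      { nra. }
      apply Rmult_lt_reg_r with (/ (eps * (2 * Cmod w + 1) + 1)).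
      { apply Rinv_0_lt_compat; nra. }
      rewrite Rmult_assoc, Rinv_r by nra. rewrite Rmult_1_r.
      replace (eta / 2 * / (eps * (2 * Cmod w + 1) + 1)) with (eta / (2 * (eps * (2 * Cmod w + 1) + 1))) by (field; nra).
      exact Hlt2. }
    unfold phi.
    replace (Cmod (f v) + eps * Cmod v ^ 2 - (Cmod (f w) + eps * Cmod w ^ 2)) with
      ((Cmod (f v) - Cmod (f w)) + eps * (Cmod v ^ 2 - Cmod w ^ 2)) by ring.
    eapply Rle_lt_trans; [apply Rabs_triang|]. rewrite Rabs_mult, (Rabs_right eps) by lra.
    assert (eps * Rabs (Cmod v ^ 2 - Cmod w ^ 2) <= eps * (Cmod (v - w) * (2 * Cmod w + 1))).
    { apply Rmult_le_compat_l; lra. }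
    lra. }
  destruct (max_attained K L phi z Hbd Hcl Hct Kz) as [w0 [Kw0 Hmax]].
  destruct (Hloc w0 Kw0) as [r0 [Hr0 Hr0']].
  destruct (open_ball Omega w0 Ho (HKO w0 Kw0)) as [rO [HrO HrO']].
  set (rr := Rmin r0 (Rmin (rO / 2) 1)).
  assert (Hrr : 0 < rr) by (unfold rr; apply Rmin_pos; [lra| apply Rmin_pos; lra]).
  assert (Hrr1 : rr <= r0) by apply Rmin_l.
  assert (Hrr2 : rr <= rO / 2) by (unfold rr; pose proof (Rmin_r r0 (Rmin (rO / 2) 1)); pose proof (Rmin_l (rO / 2) 1); lra).
  assert (Hrr3 : rr <= 1) by (unfold rr; pose proof (Rmin_r r0 (Rmin (rO / 2) 1)); pose proof (Rmin_r (rO / 2) 1); lra).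
  assert (Hdf : forall z, Cmod (z - w0) <= rr -> cdiff f z).
  { intros z' Hz'. apply ex_derive_cdiff. apply Hh. apply HrO'. lra. }
  destruct (sub_circle f w0 rr Hrr Hdf eps He) as [t Ht].
  set (w := P w0 rr t) in *.
  assert (Hw : Cmod (w - w0) = rr) by (unfold w; apply P_dist; lra).
  pose proof (Hmax z Kz) as Hz. unfold phi in Hz.
  destruct (classic (K w)) as [Kw|Kw].
  - pose proof (Hmax w Kw) as Hq. unfold phi in Hq. lra.
  - pose proof (Hr0' w ltac:(lra) Kw) as HB.
    pose proof (Cmod_tri_w w w0). pose proof (Hbd w0 Kw0). pose proof (Cmod_ge_0 w).
    assert (Cmod w ^ 2 <= (L + 1) ^ 2) by (apply pow_incr; lra).
    assert (eps * Cmod w ^ 2 <= eps * (L + 1) ^ 2) by (apply Rmult_le_compat_l; lra).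
    assert (eps * (L + 1) ^ 2 <= (Cmod (f z) - B) / 2).
    { unfold eps. apply Rmult_le_reg_r with (2 * ((L + 1) ^ 2 + 1)).
      { pose proof (pow2_ge_0 (L+1)); lra. }
      field_simplify; [|pose proof (pow2_ge_0 (L+1)); lra]. pose proof (pow2_ge_0 (L+1)). nra. }
    pose proof (pow2_ge_0 (Cmod z)).
    assert (0 <= eps * Cmod z ^ 2) by (apply Rmult_le_pos; lra).
    lra.
Qed.

Lemma Cmod_sym (x y : C) : Cmod (x - y) = Cmod (y - x).
Proof. replace (x - y)%C with (- (y - x))%C by ring. apply Cmod_opp. Qed.

Lemma Cmod_tri3 (x y z : C) : Cmod (x - z) <= Cmod (x - y) + Cmod (y - z).
Proof. replace (x - z)%C with ((x - y) + (y - z))%C by ring. apply Cmod_triangle. Qed.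

Lemma sep_of_disj (x y : C) (R : R) : ~ (exists z, cdisc x R z /\ cdisc y R z) -> Cmod (x - y) > 2 * R.
Proof.
  intros Hn. apply Rnot_le_lt. intros Hle. apply Hn.
  exists (pair ((fst x + fst y) / 2) ((snd x + snd y) / 2)). unfold cdisc.
  assert (E1 : Cminus (pair ((fst x + fst y) / 2) ((snd x + snd y) / 2)) x = ((y - x) * RtoC (/ 2))%C).
  { apply injective_projections; simpl; field. }
  assert (E2 : Cminus (pair ((fst x + fst y) / 2) ((snd x + snd y) / 2)) y = ((x - y) * RtoC (/ 2))%C).
  { apply injective_projections; simpl; field. }
  rewrite E1, E2, !Cmod_mult, Cmod_R, Rabs_right by lra. rewrite (Cmod_sym y x).
  split; lra.
Qed.

Lemma three_points (w x1 x2 x3 : C) (R : R) : 0 < R ->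
  Cmod (x1 - w) <= 11 / 10 * R -> Cmod (x2 - w) <= 11 / 10 * R -> Cmod (x3 - w) <= 11 / 10 * R ->
  Cmod (x1 - x2) > 2 * R -> Cmod (x1 - x3) > 2 * R -> Cmod (x2 - x3) > 2 * R -> False.
Proof.
  intros HR h1 h2 h3 h12 h13 h23.
  assert (Sq : forall z c, 0 <= c -> Cmod z <= c -> fst z ^ 2 + snd z ^ 2 <= c ^ 2).
  { intros z c Hc Hz. rewrite <- Cmod_sq. pose proof (Cmod_ge_0 z). apply pow_incr. lra. }
  assert (Sq2 : forall z c, 0 <= c -> Cmod z > c -> fst z ^ 2 + snd z ^ 2 > c ^ 2).
  { intros z c Hc Hz. rewrite <- Cmod_sq. apply Rlt_gt. pose proof (Cmod_ge_0 z). nra. }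
  apply Sq in h1; [|lra]. apply Sq in h2; [|lra]. apply Sq in h3; [|lra].
  apply Sq2 in h12; [|lra]. apply Sq2 in h13; [|lra]. apply Sq2 in h23; [|lra].
  simpl in *.
  set (a1 := fst x1 + - fst w) in *. set (b1 := snd x1 + - snd w) in *.
  set (a2 := fst x2 + - fst w) in *. set (b2 := snd x2 + - snd w) in *.
  set (a3 := fst x3 + - fst w) in *. set (b3 := snd x3 + - snd w) in *.
  replace (fst x1 + - fst x2) with (a1 - a2) in h12 by (unfold a1, a2; ring).
  replace (snd x1 + - snd x2) with (b1 - b2) in h12 by (unfold b1, b2; ring).
  replace (fst x1 + - fst x3) with (a1 - a3) in h13 by (unfold a1, a3; ring).
  replace (snd x1 + - snd x3) with (b1 - b3) in h13 by (unfold b1, b3; ring).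
  replace (fst x2 + - fst x3) with (a2 - a3) in h23 by (unfold a2, a3; ring).
  replace (snd x2 + - snd x3) with (b2 - b3) in h23 by (unfold b2, b3; ring).
  assert (Id : (a1 - a2) ^ 2 + (b1 - b2) ^ 2 + ((a1 - a3) ^ 2 + (b1 - b3) ^ 2) + ((a2 - a3) ^ 2 + (b2 - b3) ^ 2)
     = 3 * ((a1 ^ 2 + b1 ^ 2) + (a2 ^ 2 + b2 ^ 2) + (a3 ^ 2 + b3 ^ 2)) - ((a1 + a2 + a3) ^ 2 + (b1 + b2 + b3) ^ 2)) by ring.
  assert (0 <= (a1 + a2 + a3) ^ 2 + (b1 + b2 + b3) ^ 2) by (pose proof (pow2_ge_0 (a1+a2+a3)); pose proof (pow2_ge_0 (b1+b2+b3)); lra).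
  nra.
Qed.

Section Geo.
Variables (a : nat -> C) (R : R) (NN : option nat) (Nst : nat).
Hypothesis HR : 0 < R.
Hypothesis Hsep : forall m n, in_idx NN m -> in_idx NN n -> (Nst < m)%nat -> (Nst < n)%nat -> m <> n ->
  Cmod (a m - a n) > 2 * R.

Lemma finite_gap (Pj : nat -> Prop) (w : C) :
  (forall j, Pj j -> Cmod (a j - w) > R) ->
  forall n, exists rho, 0 < rho /\ forall j, (j <= n)%nat -> Pj j -> Cmod (a j - w) > R + rho.
Proof.
  intros Hg n. induction n.
  - destruct (classic (Pj 0%nat)) as [H0|H0].
    + pose proof (Hg _ H0). exists ((Cmod (a 0%nat - w) - R) / 2). split; [lra|].
      intros j Hj Pj0. assert (j = 0%nat) by lia. subst. lra.
    + exists 1. split; [lra|]. intros j Hj Pj0. assert (j = 0%nat) by lia. subst. contradiction.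
  - destruct IHn as [r1 [Hr1 H1]].
    destruct (classic (Pj (S n))) as [H0|H0].
    + pose proof (Hg _ H0). set (r2 := (Cmod (a (S n) - w) - R) / 2).
      exists (Rmin r1 r2). split. { apply Rmin_pos; unfold r2; lra. }
      intros j Hj Pj0. pose proof (Rmin_l r1 r2). pose proof (Rmin_r r1 r2).
      destruct (Nat.eq_dec j (S n)) as [->|Hne].
      * unfold r2 in *. lra.
      * pose proof (H1 j ltac:(lia) Pj0). lra.
    + exists r1. split; auto. intros j Hj Pj0.
      destruct (Nat.eq_dec j (S n)) as [->|Hne]; [contradiction|]. apply H1; auto; lia.
Qed.

Lemma gap (Pj : nat -> Prop) (w : C) :
  (forall j, Pj j -> in_idx NN j) ->
  (forall j, Pj j -> Cmod (a j - w) > R) ->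
  exists rho, 0 < rho /\ forall j, Pj j -> Cmod (a j - w) > R + rho.
Proof.
  intros Hin Hg.
  destruct (finite_gap Pj w Hg Nst) as [r1 [Hr1 H1]].
  set (Q := fun j => Pj j /\ (Nst < j)%nat /\ Cmod (a j - w) <= 11 / 10 * R).
  assert (Hbig : exists r2, 0 < r2 /\ forall j, Pj j -> (Nst < j)%nat -> Cmod (a j - w) > R + r2).
  { destruct (classic (exists j1, Q j1)) as [[j1 Q1]|NQ].
    - destruct (classic (exists j2, Q j2 /\ j2 <> j1)) as [[j2 [Q2 N12]]|NQ2].
      + destruct Q1 as [P1 [B1 C1]]. destruct Q2 as [P2 [B2 C2]].
        pose proof (Hg _ P1). pose proof (Hg _ P2).
        set (r2 := Rmin (R / 20) (Rmin ((Cmod (a j1 - w) - R) / 2) ((Cmod (a j2 - w) - R) / 2))).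
        pose proof (Rmin_l (R / 20) (Rmin ((Cmod (a j1 - w) - R) / 2) ((Cmod (a j2 - w) - R) / 2))).
        pose proof (Rmin_r (R / 20) (Rmin ((Cmod (a j1 - w) - R) / 2) ((Cmod (a j2 - w) - R) / 2))).
        pose proof (Rmin_l ((Cmod (a j1 - w) - R) / 2) ((Cmod (a j2 - w) - R) / 2)).
        pose proof (Rmin_r ((Cmod (a j1 - w) - R) / 2) ((Cmod (a j2 - w) - R) / 2)).
        exists r2. split. { unfold r2. apply Rmin_pos; [lra| apply Rmin_pos; lra]. }
        intros j Pj0 Bj.
        destruct (Nat.eq_dec j j1) as [->|N1]. { unfold r2 in *; lra. }
        destruct (Nat.eq_dec j j2) as [->|N2]. { unfold r2 in *; lra. }
        apply Rnot_le_lt. intros Hle.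
        destruct (Rle_lt_dec (Cmod (a j - w)) (11 / 10 * R)) as [Cj|Cj]; [|unfold r2 in *; lra].
        apply (three_points w (a j) (a j1) (a j2) R HR Cj C1 C2).
        * apply Hsep; auto.
        * apply Hsep; auto.
        * apply Hsep; auto.
      + destruct Q1 as [P1 [B1 C1]]. pose proof (Hg _ P1).
        set (r2 := Rmin (R / 20) ((Cmod (a j1 - w) - R) / 2)).
        pose proof (Rmin_l (R / 20) ((Cmod (a j1 - w) - R) / 2)).
        pose proof (Rmin_r (R / 20) ((Cmod (a j1 - w) - R) / 2)).
        exists r2. split. { unfold r2. apply Rmin_pos; lra. }
        intros j Pj0 Bj.
        destruct (Nat.eq_dec j j1) as [->|N1]. { unfold r2 in *; lra. }
        destruct (Rle_lt_dec (Cmod (a j - w)) (11 / 10 * R)) as [Cj|Cj]; [|unfold r2 in *; lra].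
        exfalso. apply NQ2. exists j. split; auto. split; auto.
    - exists (R / 20). split; [lra|]. intros j Pj0 Bj.
      destruct (Rle_lt_dec (Cmod (a j - w)) (11 / 10 * R)) as [Cj|Cj]; [|lra].
      exfalso. apply NQ. exists j. split; auto. }
  destruct Hbig as [r2 [Hr2 H2]].
  exists (Rmin r1 r2). split. { apply Rmin_pos; lra. }
  intros j Pj0. pose proof (Rmin_l r1 r2). pose proof (Rmin_r r1 r2).
  destruct (Compare_dec.le_lt_dec j Nst) as [Hs|Hs].
  - pose proof (H1 j Hs Pj0). lra.
  - pose proof (H2 j Pj0 Hs). lra.
Qed.

End Geo.

Lemma Rpower_pos' x y : 0 < Rpower x y.
Proof. unfold Rpower. apply exp_pos. Qed.

Lemma rpow_nonneg x p : 0 <= rpow x p.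
Proof. unfold rpow. destruct (Req_EM_T x 0); [lra| left; apply Rpower_pos']. Qed.

Lemma rpow_eq x p : x <> 0 -> rpow x p = Rpower x p.
Proof. intros H. unfold rpow. destruct (Req_EM_T x 0); [contradiction| reflexivity]. Qed.

Lemma rpow_mono x y p : 0 < p -> 0 <= x -> x <= y -> rpow x p <= rpow y p.
Proof.
  intros Hp Hx Hxy. destruct (Req_dec x 0) as [->|Hx0].
  - unfold rpow at 1. destruct (Req_EM_T 0 0); [|congruence]. apply rpow_nonneg.
  - rewrite !rpow_eq by lra. apply Rle_Rpower_l; lra.
Qed.

Lemma Rpower2_ge1 p : 0 < p -> 1 <= Rpower 2 p.
Proof. intros Hp. rewrite <- (Rpower_O 2) by lra. apply Rle_Rpower; lra. Qed.

Lemma rpow_shift x k p : 0 < p -> 0 <= x -> 0 < k ->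
  rpow (x + k) p <= Rpower (2 * k) p + Rpower 2 p * rpow x p.
Proof.
  intros Hp Hx Hk. rewrite rpow_eq by lra.
  pose proof (Rpower_pos' (2 * k) p). pose proof (Rpower_pos' 2 p). pose proof (rpow_nonneg x p).
  destruct (Rle_dec x k) as [Hle|Hlt].
  - assert (Rpower (x + k) p <= Rpower (2 * k) p) by (apply Rle_Rpower_l; lra).
    nra.
  - rewrite rpow_eq by lra. rewrite Rpower_mult_distr by lra.
    assert (Rpower (x + k) p <= Rpower (2 * x) p) by (apply Rle_Rpower_l; lra). lra.
Qed.

Lemma finite_bound (a : nat -> C) n : exists L0, 0 <= L0 /\ forall j, (j <= n)%nat -> Cmod (a j) <= L0.
Proof.
  induction n.
  - exists (Cmod (a 0%nat)). split; [apply Cmod_ge_0|]. intros j Hj. assert (j = 0%nat) by lia. subst; lra.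
  - destruct IHn as [L [HL HL']]. exists (Rmax L (Cmod (a (S n)))). split.
    { eapply Rle_trans; [exact HL| apply Rmax_l]. }
    intros j Hj. destruct (Nat.eq_dec j (S n)) as [->|Hne].
    + apply Rmax_r.
    + eapply Rle_trans; [apply HL'; lia| apply Rmax_l].
Qed.

Lemma exp_mono x y : x <= y -> exp x <= exp y.
Proof. intros H. destruct (Rle_lt_or_eq_dec _ _ H) as [h|h]. left; apply exp_increasing; auto. rewrite h; lra. Qed.

Theorem proposition7
  (Omega : C -> Prop) (p Rad : R) (a : nat -> C) (NN : option nat)
  (f : C -> C) :
  @open C_UniformSpace Omega ->
  0 < p -> 0 < Rad ->
  (forall n, in_idx NN n -> forall z, cdisc (a n) Rad z -> Omega z) ->
  (NN = None ->
     exists N : nat, forall m n : nat, (N < m)%nat -> (N < n)%nat -> m <> n ->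
       ~ (exists z, cdisc (a m) Rad z /\ cdisc (a n) Rad z)) ->
  holo_on Omega f ->
  A_p p (fun z => Omega z /\ ~ (exists n, in_idx NN n /\ cdisc (a n) Rad z)) f ->
  A_p p Omega f.
Proof.
  intros Ho Hp HR Hdisc Hdisj Hh [_ [c [M [Hc [HM Hgr]]]]].
  assert (HN : exists Nst, forall m n, in_idx NN m -> in_idx NN n -> (Nst < m)%nat -> (Nst < n)%nat -> m <> n ->
     Cmod (a m - a n) > 2 * Rad).
  { destruct NN as [N|].
    - exists N. intros m n Hm. simpl in Hm. lia.
    - destruct (Hdisj eq_refl) as [N HN]. exists N. intros m n _ _ H1 H2 H3. apply sep_of_disj. apply HN; auto. }
  destruct HN as [Nst Hsep].
  destruct (finite_bound a Nst) as [L0 [HL0 HL0']].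
  set (k := L0 + 4 * Rad + 1).
  split; [exact Hh|].
  exists (c * Rpower 2 p), (M * exp (c * Rpower (2 * k) p)).
  split. { apply Rmult_lt_0_compat; auto; apply Rpower_pos'. }
  split. { apply Rmult_lt_0_compat; auto; apply exp_pos. }
  intros z Hz.
  pose proof (Cmod_ge_0 z) as Hz0.
  assert (Suff : forall Y, Y <= Rpower (2 * k) p + Rpower 2 p * rpow (Cmod z) p ->
     M * exp (c * Y) <= M * exp (c * Rpower (2 * k) p) * exp (c * Rpower 2 p * rpow (Cmod z) p)).
  { intros Y HY. rewrite Rmult_assoc, <- exp_plus. apply Rmult_le_compat_l; [lra|]. apply exp_mono.
    replace (c * Rpower (2 * k) p + c * Rpower 2 p * rpow (Cmod z) p) with (c * (Rpower (2 * k) p + Rpower 2 p * rpow (Cmod z) p)) by ring.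
    apply Rmult_le_compat_l; lra. }
  destruct (classic (exists n, in_idx NN n /\ cdisc (a n) Rad z)) as [[n [Hn Hzn]]|Hno].
  2:{ eapply Rle_trans; [apply (Hgr z (conj Hz Hno))|]. apply Suff.
      pose proof (Rpower_pos' (2 * k) p). pose proof (Rpower2_ge1 p Hp). pose proof (rpow_nonneg (Cmod z) p). nra. }
  set (Lam := L0 + 2 * Rad + Cmod z + Rad).
  set (K := fun w => exists j, in_idx NN j /\ Cmod (a j) <= Lam /\ cdisc (a j) Rad w).
  assert (HK1 : forall w, K w -> Omega w).
  { intros w [j [Hj1 [_ Hj3]]]. apply (Hdisc j Hj1 w Hj3). }
  assert (HK2 : forall w, K w -> Cmod w <= Lam + Rad).
  { intros w [j [_ [Hj2 Hj3]]]. unfold cdisc in Hj3. pose proof (Cmod_tri_w w (a j)). lra. }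
  assert (HK3 : forall w, ~ K w -> exists r, 0 < r /\ forall v, Cmod (v - w) < r -> ~ K v).
  { intros w Hnk.
    destruct (gap a Rad NN Nst HR Hsep (fun j => in_idx NN j /\ Cmod (a j) <= Lam) w) as [r [Hr Hr']].
    { intros j [Hj _]; auto. }
    { intros j [Hj1 Hj2]. apply Rnot_le_lt. intros Hle. apply Hnk. exists j. split; auto. split; auto.
      unfold cdisc. rewrite Cmod_sym. auto. }
    exists r. split; auto. intros v Hv [j [Hj1 [Hj2 Hj3]]].
    pose proof (Hr' j (conj Hj1 Hj2)). pose proof (Cmod_tri3 (a j) v w).
    unfold cdisc in Hj3. rewrite Cmod_sym in Hj3. lra. }
  assert (HK4 : forall w0, K w0 -> exists r, 0 < r /\ forall w, Cmod (w - w0) <= r -> ~ K w ->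
     Cmod (f w) <= M * exp (c * rpow (Lam + Rad + 1) p)).
  { intros w0 Kw0. pose proof (HK2 w0 Kw0) as Hw0b. destruct Kw0 as [m [Hm1 [Hm2 Hm3]]].
    assert (HO : forall j, in_idx NN j /\ Cmod (a j) > Lam -> Cmod (a j - w0) > Rad).
    { intros j [Hj1 Hj2].
      destruct (Compare_dec.le_lt_dec j Nst) as [Hs|Hs].
      { pose proof (HL0' j Hs). unfold Lam in *. lra. }
      unfold cdisc in Hm3.
      destruct (Compare_dec.le_lt_dec m Nst) as [Hms|Hms].
      - pose proof (HL0' m Hms). pose proof (Cmod_tri_w w0 (a m)). pose proof (Cmod_tri_w (a j) w0).
        unfold Lam in *. lra.
      - assert (Hmj : m <> j) by (intros ->; lra).
        pose proof (Hsep m j Hm1 Hj1 Hms Hs Hmj). pose proof (Cmod_tri3 (a m) w0 (a j)) as Hq.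
        rewrite (Cmod_sym (a m) w0) in Hq. rewrite (Cmod_sym w0 (a j)) in Hq. lra. }
    destruct (gap a Rad NN Nst HR Hsep (fun j => in_idx NN j /\ Cmod (a j) > Lam) w0) as [r0 [Hr0 Hr0']].
    { intros j [Hj _]; auto. }
    { exact HO. }
    destruct (open_ball Omega w0 Ho (Hdisc m Hm1 w0 Hm3)) as [rO [HrO HrO']].
    set (r := Rmin (r0 / 2) (Rmin (rO / 2) 1)).
    pose proof (Rmin_l (r0 / 2) (Rmin (rO / 2) 1)). pose proof (Rmin_r (r0 / 2) (Rmin (rO / 2) 1)).
    pose proof (Rmin_l (rO / 2) 1). pose proof (Rmin_r (rO / 2) 1).
    exists r. split. { unfold r. apply Rmin_pos; [lra| apply Rmin_pos; lra]. }
    intros w Hw Hnk.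
    assert (HOw : Omega w) by (apply HrO'; unfold r in *; lra).
    assert (Hnd : ~ (exists n, in_idx NN n /\ cdisc (a n) Rad w)).
    { intros [j [Hj Hjw]]. destruct (Rle_dec (Cmod (a j)) Lam) as [Hle|Hgt].
      - apply Hnk. exists j. auto.
      - pose proof (Hr0' j (conj Hj (Rnot_le_lt _ _ Hgt))). pose proof (Cmod_tri3 (a j) w w0).
        unfold cdisc in Hjw. rewrite Cmod_sym in Hjw. unfold r in *. lra. }
    eapply Rle_trans; [apply (Hgr w (conj HOw Hnd))|].
    apply Rmult_le_compat_l; [lra|]. apply exp_mono. apply Rmult_le_compat_l; [lra|].
    apply rpow_mono; auto. apply Cmod_ge_0.
    pose proof (Cmod_tri_w w w0). unfold r in *. lra. }
  assert (Kz : K z).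
  { exists n. split; auto. split; auto. unfold cdisc in Hzn. pose proof (Cmod_tri_w (a n) z).
    rewrite Cmod_sym in Hzn. unfold Lam. lra. }
  pose proof (MP Omega f K (Lam + Rad) (M * exp (c * rpow (Lam + Rad + 1) p)) Ho Hh HK1 HK2 HK3 HK4 z Kz) as HB.
  eapply Rle_trans; [exact HB|]. apply Suff.
  replace (Lam + Rad + 1) with (Cmod z + k) by (unfold Lam, k; ring).
  apply rpow_shift; auto. unfold k; lra.
Qed.
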